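(* Let $R$ be a Noetherian local ring, $F=\{J_n\}_{n\ge0}$ a Noetherian filtration of ideals and $I$ an ideal of $R$. Then $\operatorname{ar}_F(I)=d(\operatorname{in}_F(I))$.
   Context: A filtration $F=\{J_n\}$ satisfies $J_0=R$, $J_m\subseteq J_n$ for $m>n$, $J_mJ_n\subseteq J_{m+n}$; it is Noetherian if $\Re_F(R)=\bigoplus_nJ_n$ is Noetherian. $\operatorname{gr}_F(R)=\bigoplus_nJ_n/J_{n+1}$; for $0\ne f\in J_n\setminus J_{n+1}$, $f^*$ is its class in $J_n/J_{n+1}$, $0^*=0$, and $\operatorname{in}_F(I)$ is the ideal of $\operatorname{gr}_F(R)$ generated by $f^*$, $f\in I$. For a graded ideal $Q$, $d(Q)$ is the maximum degree of the elements of a minimal homogeneous generating set of $Q$. $\operatorname{ar}_F(I)=d\big(\bigoplus_n(J_n\cap I)\big)$, computed in $\Re_F(R)$. *)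

(* Defs.v *)
From mathcomp Require Import all_boot all_order all_algebra.
Set Implicit Arguments. Unset Strict Implicit. Unset Printing Implicit Defensive.
Import GRing.Theory.
Local Open Scope ring_scope.

Definition is_ideal (R : comNzRingType) (I : R -> Prop) : Prop :=
  I 0 /\ (forall x y, I x -> I y -> I (x + y)) /\ (forall a x, I x -> I (a * x)).

Definition span (R : comNzRingType) (s : seq R) (x : R) : Prop :=
  exists c : nat -> R, x = \sum_(i < size s) c i * s`_i.

Definition noetherian_ring (R : comNzRingType) : Prop :=
  forall I : R -> Prop, is_ideal I -> exists s : seq R, forall x, I x <-> span s x.

Definition local_ring (R : comNzRingType) : Prop :=
  exists m : R -> Prop, is_ideal m /\ ~ m 1 /\
    forall I : R -> Prop, is_ideal I -> ~ I 1 -> forall x, I x -> m x.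

Definition filtration (R : comNzRingType) (J : nat -> R -> Prop) : Prop :=
  (forall n, is_ideal (J n)) /\ (forall x, J 0%N x) /\
  (forall m n, (n < m)%N -> forall x, J m x -> J n x) /\
  (forall m n x y, J m x -> J n y -> J (m + n)%N (x * y)).

(* The Rees algebra Re_F(R) = (+)_n J_n t^n, as a subset of R[t]. *)
Definition rees (R : comNzRingType) (J : nat -> R -> Prop) (p : {poly R}) : Prop :=
  forall i, J i p`_i.

Definition rees_ideal (R : comNzRingType) (J : nat -> R -> Prop) (Q : {poly R} -> Prop) : Prop :=
  (forall p, Q p -> rees J p) /\ Q 0 /\ (forall p q, Q p -> Q q -> Q (p + q)) /\
  (forall a p, rees J a -> Q p -> Q (a * p)).

(* Noetherian filtration: Re_F(R) is a Noetherian ring, i.e. every ideal of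
   Re_F(R) is finitely generated (with coefficients in Re_F(R)). *)
Definition noetherian_filtration (R : comNzRingType) (J : nat -> R -> Prop) : Prop :=
  forall Q : {poly R} -> Prop, rees_ideal J Q ->
    exists s : seq {poly R}, (forall p, p \in s -> rees J p) /\
      forall p, Q p <-> exists c : nat -> {poly R},
        (forall i, rees J (c i)) /\ p = \sum_(i < size s) c i * s`_i.

(* A homogeneous element is represented by a pair (d, c) : degree d and c in J_d
   (standing for c t^d in Re_F(R), resp. the class of c in J_d/J_{d+1} in gr_F(R)).
   A graded ideal Q is represented by its homogeneous components Q n (subsets of J_n). *)
Definition hnth (R : comNzRingType) (S : seq (nat * R)) i := nth (0%N, 0) S i.

(* degree n homogeneous component of the ideal of Re_F(R) generated by S:
   sums of r_i * c_i with r_i in J_{n - d_i}. *)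
Definition rees_comb (R : comNzRingType) (J : nat -> R -> Prop) (S : seq (nat * R))
    (n : nat) (x : R) : Prop :=
  exists r : nat -> R,
    (forall i, (i < size S)%N -> ((hnth S i).1 <= n)%N -> J (n - (hnth S i).1)%N (r i)) /\
    x = \sum_(i < size S | ((hnth S i).1 <= n)%N) r i * (hnth S i).2.

(* degree n homogeneous component of the ideal of gr_F(R) generated by S,
   membership tested on representatives x in J_n (modulo J_{n+1}). *)
Definition gr_comb (R : comNzRingType) (J : nat -> R -> Prop) (S : seq (nat * R))
    (n : nat) (x : R) : Prop :=
  exists y, rees_comb J S n y /\ J n.+1 (x - y).

Definition homogeneous_list (R : comNzRingType) (J : nat -> R -> Prop) (S : seq (nat * R)) :=
  forall p, p \in S -> J p.1 p.2.

Definition rees_gen (R : comNzRingType) (J : nat -> R -> Prop) (Q : nat -> R -> Prop)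
    (S : seq (nat * R)) : Prop :=
  homogeneous_list J S /\ forall n x, Q n x <-> rees_comb J S n x.

Definition gr_gen (R : comNzRingType) (J : nat -> R -> Prop) (Q : nat -> R -> Prop)
    (S : seq (nat * R)) : Prop :=
  homogeneous_list J S /\ forall n x, J n x -> (Q n x <-> gr_comb J S n x).

Definition rees_min_gen (R : comNzRingType) (J : nat -> R -> Prop) (Q : nat -> R -> Prop)
    (S : seq (nat * R)) : Prop :=
  rees_gen J Q S /\ forall p, p \in S -> ~ rees_gen J Q (rem p S).

Definition gr_min_gen (R : comNzRingType) (J : nat -> R -> Prop) (Q : nat -> R -> Prop)
    (S : seq (nat * R)) : Prop :=
  gr_gen J Q S /\ forall p, p \in S -> ~ gr_gen J Q (rem p S).

(* maximal degree of a (finite) homogeneous generating set; 0 for the empty set *)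
Definition maxdeg (R : Type) (S : seq (nat * R)) : nat := \max_(p <- S) p.1.

(* The graded ideal (+)_n (J_n cap I) of Re_F(R) *)
Definition ar_ideal (R : comNzRingType) (J : nat -> R -> Prop) (I : R -> Prop) :
    nat -> R -> Prop := fun n x => J n x /\ I x.

(* in_F(I): ideal of gr_F(R) generated by the initial forms f^* (f in I, f in J_m \ J_{m+1});
   degree n component, on representatives x in J_n. *)
Definition in_ideal (R : comNzRingType) (J : nat -> R -> Prop) (I : R -> Prop) :
    nat -> R -> Prop := fun n x =>
  J n x /\ exists L : seq (nat * R),
    (forall p, p \in L -> I p.2 /\ J p.1 p.2 /\ ~ J p.1.+1 p.2) /\ gr_comb J L n x.

(* Main.v *)
Require Import Defs.
From mathcomp Require Import all_boot all_order all_algebra.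
From mathcomp Require Import zify ring.
From Stdlib Require Import Classical.
Set Implicit Arguments. Unset Strict Implicit. Unset Printing Implicit Defensive.
Import GRing.Theory.
Local Open Scope ring_scope.

Inductive genA (R : comNzRingType) (J : nat -> R -> Prop) (S : seq (nat * R)) (n : nat) : R -> Prop :=
| gA0 : genA J S n 0
| gAD x y : genA J S n x -> genA J S n y -> genA J S n (x + y)
| gAg (p : nat * R) r : p \in S -> (p.1 <= n)%N -> J (n - p.1)%N r -> genA J S n (r * p.2).

Inductive small (R : comNzRingType) (J : nat -> R -> Prop) (m : R -> Prop)
   (A : nat -> R -> Prop) (n : nat) : R -> Prop :=
| sm0 : small J m A n 0
| smD x y : small J m A n x -> small J m A n y -> small J m A n (x + y)
| smM u a : m u -> A n a -> small J m A n (u * a)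
| smJ k r a : (0 < k)%N -> (k <= n)%N -> J k r -> A (n - k)%N a -> small J m A n (r * a).

Section Basics.
Lemma id0 (R : comNzRingType) (I : R -> Prop) : is_ideal I -> I 0.
Proof. by case. Qed.
Lemma idD (R : comNzRingType) (I : R -> Prop) x y : is_ideal I -> I x -> I y -> I (x + y).
Proof. by case=> _ [H _]; apply: H. Qed.
Lemma idM (R : comNzRingType) (I : R -> Prop) a x : is_ideal I -> I x -> I (a * x).
Proof. by case=> _ [_ H]; apply: H. Qed.
Lemma idMr (R : comNzRingType) (I : R -> Prop) a x : is_ideal I -> I x -> I (x * a).
Proof. by move=> H Hx; rewrite mulrC; apply: idM. Qed.
Lemma idN (R : comNzRingType) (I : R -> Prop) x : is_ideal I -> I x -> I (- x).
Proof. by move=> H Hx; rewrite -mulN1r; apply: idM. Qed.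
Lemma idB (R : comNzRingType) (I : R -> Prop) x y : is_ideal I -> I x -> I y -> I (x - y).
Proof. by move=> H Hx Hy; apply: idD => //; apply: idN. Qed.

Lemma Jeq (R : comNzRingType) (J : nat -> R -> Prop) n m x : n = m -> J n x -> J m x.
Proof. by move=> ->. Qed.

Lemma Jid (R : comNzRingType) (J : nat -> R -> Prop) n : filtration J -> is_ideal (J n).
Proof. by case. Qed.
Lemma Jall0 (R : comNzRingType) (J : nat -> R -> Prop) x : filtration J -> J 0%N x.
Proof. by case=> _ []. Qed.
Lemma Jdec (R : comNzRingType) (J : nat -> R -> Prop) m n x : filtration J ->
  (m <= n)%N -> J n x -> J m x.
Proof.
case=> _ [_ [H _]]; rewrite leq_eqVlt => /orP [/eqP -> //|Hlt].
by apply: H.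
Qed.
Lemma JM (R : comNzRingType) (J : nat -> R -> Prop) a b x y : filtration J ->
  J a x -> J b y -> J (a + b)%N (x * y).
Proof. by case=> _ [_ [_ H]]; apply: H. Qed.
End Basics.

Section GenA.
Variables (R : comNzRingType) (J : nat -> R -> Prop).
Hypothesis hF : filtration J.

Lemma genA_sub S S' n x : (forall p, p \in S -> p \in S') -> genA J S n x -> genA J S' n x.
Proof.
move=> HS; elim=> [|y z _ Hy _ Hz|p r Hp Hle Hr]; first exact: gA0.
- exact: gAD.
- by apply: gAg => //; apply: HS.
Qed.

Lemma genA_scale S n x a : genA J S n x -> genA J S n (a * x).
Proof.
elim=> [|y z _ Hy _ Hz|p r Hp Hle Hr]; first by rewrite mulr0; exact: gA0.
- by rewrite mulrDr; exact: gAD.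
- by rewrite mulrA; apply: gAg => //; apply: idM => //; apply: Jid.
Qed.

Lemma genA_shift S n x k r : J k r -> genA J S n x -> genA J S (k + n)%N (r * x).
Proof.
move=> Hr; elim=> [|y z _ Hy _ Hz|p r' Hp Hle Hr']; first by rewrite mulr0; exact: gA0.
- by rewrite mulrDr; exact: gAD.
- rewrite mulrA; apply: gAg => //; first by lia.
  apply: (Jeq (n := (k + (n - p.1))%N)); first by lia.
  exact: JM.
Qed.

Lemma genA_sum S n I0 (r : seq I0) (P : pred I0) (F : I0 -> R) :
  (forall i, P i -> genA J S n (F i)) -> genA J S n (\sum_(i <- r | P i) F i).
Proof. by move=> H; apply: big_ind => //; [exact: gA0 | exact: gAD]. Qed.

Lemma rees_comb_genA S n x : rees_comb J S n x <-> genA J S n x.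
Proof.
split.
- move=> [r [Hr ->]]; apply: genA_sum => i Hi.
  apply: gAg => //; first by apply: mem_nth.
  by apply: Hr.
- elim=> [|y z _ [r1 [H1 ->]] _ [r2 [H2 ->]]|p r Hp Hle Hr].
  + exists (fun _ => 0); split; first by move=> *; apply: id0; apply: Jid.
    by rewrite big1 // => i _; rewrite mul0r.
  + exists (fun i => r1 i + r2 i); split.
      by move=> i Hi Hd; apply: idD; [apply: Jid | apply: H1 | apply: H2].
    by rewrite -big_split /=; apply: eq_bigr => i _; rewrite mulrDl.
  + have Hk : (index p S < size S)%N by rewrite index_mem.
    have Hn : hnth S (index p S) = p by rewrite /hnth nth_index.
    exists (fun i => if i == index p S then r else 0); split.
      move=> i Hi Hd; case: eqP => [->|_]; first by rewrite Hn.
      by apply: id0; apply: Jid.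
    rewrite (bigD1 (Ordinal Hk)) /=; last by rewrite Hn.
    rewrite eqxx Hn big1 ?addr0 // => i /andP [_ Hne].
    have -> : (nat_of_ord i == index p S) = false.
      by apply/negbTE; apply: contra Hne => /eqP Hi; apply/eqP; apply: val_inj.
    by rewrite mul0r.
Qed.

Lemma mem_rem_neq (T : eqType) (p q : T) (s : seq T) : q != p -> q \in s -> q \in rem p s.
Proof.
move=> Hne; elim: s => [//|x s IH] /=; rewrite in_cons => /orP [/eqP Eq|Hq].
- by rewrite -Eq /= (negbTE Hne) mem_head.
- by case: eqP => _ //; rewrite in_cons IH ?orbT.
Qed.

Lemma decomp S p n x : genA J S n x ->
  exists l g, genA J (rem p S) n g /\ x = l * p.2 + g /\
    ((p.1 <= n)%N -> J (n - p.1)%N l) /\ ((n < p.1)%N -> l = 0).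
Proof.
elim=> [|y z _ [l1 [g1 [G1 [-> [L1 Z1]]]]] _ [l2 [g2 [G2 [-> [L2 Z2]]]]]|q r Hq Hle Hr].
- exists 0, 0; split; first exact: gA0.
  split; first by rewrite mul0r addr0.
  by split=> // _; apply: id0; apply: Jid.
- exists (l1 + l2), (g1 + g2); split; first exact: gAD.
  split; first by rewrite mulrDl addrACA.
  split; first by move=> H; apply: idD; [apply: Jid|apply: L1|apply: L2].
  by move=> H; rewrite Z1 // Z2 // addr0.
- case: (eqVneq q p) => [Eq|Hne].
  + exists r, 0; split; first exact: gA0.
    split; first by rewrite addr0 Eq.
    by split; rewrite -Eq // ltnNge Hle.
  + exists 0, (r * q.2); split; first by apply: gAg => //; apply: mem_rem_neq.
    split; first by rewrite mul0r add0r.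
    by split=> // _; apply: id0; apply: Jid.
Qed.

End GenA.

Lemma prune (T0 : eqType) (P : seq T0 -> Prop) S : P S ->
  exists S', P S' /\ forall p, p \in S' -> ~ P (rem p S').
Proof.
move: {2}(size S) (leqnn (size S)) => n; elim: n S => [|n IH] S Hs HP.
- by exists S; split=> // p; case: S Hs HP.
- case: (classic (exists p, p \in S /\ P (rem p S))) => [[p [Hp HPp]]|H].
  + apply: (IH (rem p S)) => //; rewrite size_rem //.
    by case: (size S) Hs => //= k; rewrite ltnS.
  + by exists S; split=> // p Hp HPp; apply: H; exists p.
Qed.

Lemma max_exists (R : eqType) (S : seq (nat * R)) : S <> [::] -> exists2 p, p \in S & p.1 = maxdeg S.
Proof.
elim: S => [//|p S IH] _; rewrite /maxdeg big_cons.
case: S IH => [|p' S'] IH.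
- by exists p; [rewrite mem_head | rewrite big_nil maxn0].
- have [q Hq Eq] := IH ltac:(by []).
  rewrite /maxdeg in Eq; rewrite -Eq.
  case: (leqP q.1 p.1) => H.
  + by exists p; rewrite ?mem_head.
  + by exists q; rewrite // in_cons Hq orbT.
Qed.

Section Main.
Variables (R : comNzRingType) (J : nat -> R -> Prop) (I : R -> Prop) (m : R -> Prop).
Hypothesis hF : filtration J.
Hypothesis hI : is_ideal I.
Hypothesis hm : is_ideal m.
Hypothesis hm1 : ~ m 1.
Hypothesis hmax : forall K : R -> Prop, is_ideal K -> ~ K 1 -> forall x, K x -> m x.
Local Notation A := (ar_ideal J I).
Local Notation B := (in_ideal J I).

Lemma unit1m u : m u -> exists v, v * (1 - u) = 1.
Proof.
move=> Hu; apply: NNPP => H.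
have HK : is_ideal (fun x => exists v, x = v * (1 - u)).
  split; first by exists 0; rewrite mul0r.
  split; first by move=> x y [v1 ->] [v2 ->]; exists (v1 + v2); rewrite mulrDl.
  by move=> a x [v ->]; exists (a * v); rewrite mulrA.
have H1 : ~ (exists v, 1 = v * (1 - u)) by move=> [v Hv]; apply: H; exists v.
have Hm := hmax HK H1 (ex_intro _ 1 (esym (mul1r _))).
apply: hm1; have -> : (1 : R) = (1 - u) + u by rewrite subrK.
exact: idD.
Qed.

Lemma A0 n : A n 0.
Proof. by split; apply: id0 => //; apply: Jid. Qed.
Lemma A_add n x y : A n x -> A n y -> A n (x + y).
Proof. by move=> [? ?] [? ?]; split; apply: idD => //; apply: Jid. Qed.
Lemma A_scale n a x : A n x -> A n (a * x).
Proof. by move=> [? ?]; split; apply: idM => //; apply: Jid. Qed.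
Lemma A_mulJ k n r x : J k r -> A n x -> A (k + n)%N (r * x).
Proof. by move=> Hr [? ?]; split; [apply: JM | apply: idM]. Qed.
Lemma A_dec n k x : (k <= n)%N -> A n x -> A k x.
Proof. by move=> H [? ?]; split => //; apply: Jdec H _. Qed.

Lemma small_A n x : small J m A n x -> A n x.
Proof.
elim=> [|y z _ Hy _ Hz|u a Hu Ha|k r a Hk Hkn Hr Ha].
- exact: A0.
- exact: A_add.
- exact: A_scale.
- by rewrite -(subnKC Hkn); apply: A_mulJ.
Qed.

Lemma gen1 S (p : nat * R) : p \in S -> genA J S p.1 p.2.
Proof.
move=> Hp; have := gAg (J := J) (n := p.1) (r := 1) Hp (leqnn _).
by rewrite subnn mul1r; apply; apply: Jall0.
Qed.

Lemma genA_inA S n x : (forall p, p \in S -> A p.1 p.2) -> genA J S n x -> A n x.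
Proof.
move=> HS; elim=> [|y z _ Hy _ Hz|p r Hp Hle Hr].
- exact: A0.
- exact: A_add.
- by rewrite -(subnK Hle); apply: A_mulJ => //; apply: HS.
Qed.

Lemma rees_gen_mem Q S p : rees_gen J Q S -> p \in S -> Q p.1 p.2.
Proof. by move=> [_ HQ] Hp; apply/HQ/(rees_comb_genA hF); apply: gen1. Qed.

Lemma rees_gen_iff Q S n x : rees_gen J Q S -> (Q n x <-> genA J S n x).
Proof.
move=> [_ HQ]; split; first by move/HQ/(rees_comb_genA hF).
by move/(rees_comb_genA hF)/HQ.
Qed.

Lemma B_char n x : B n x <-> J n x /\ exists a, A n a /\ J n.+1 (x - a).
Proof.
split.
- move=> [Jx [L [HL [y [Hy Hxy]]]]]; split=> //; exists y; split=> //.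
  apply: (genA_inA (S := L)); first by move=> p /HL [Ip [Jp _]].
  exact/(rees_comb_genA hF).
- move=> [Jx [a [[Ja Ia] Hxa]]]; split=> //.
  case: (classic (J n.+1 a)) => Ha.
  + exists [::]; split=> //; exists 0; split; first by apply/(rees_comb_genA hF); exact: gA0.
    rewrite subr0; have -> : x = (x - a) + a by rewrite subrK.
    by apply: idD => //; apply: Jid.
  + exists [:: (n, a)]; split; first by move=> p; rewrite inE => /eqP -> /=.
    exists a; split; last exact: Hxa.
    by apply/(rees_comb_genA hF); apply: (gen1 (p := (n, a))); rewrite mem_head.
Qed.

Lemma gr_gen_mem Q S p : gr_gen J Q S -> p \in S -> Q p.1 p.2.
Proof.
move=> [Hh HQ] Hp; apply/HQ; first exact: Hh.
exists p.2; split; first by apply/(rees_comb_genA hF); exact: gen1.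
by rewrite subrr; apply: id0; apply: Jid.
Qed.

Lemma gr_gen_iff Q S n x : gr_gen J Q S -> J n x ->
  (Q n x <-> exists y, genA J S n y /\ J n.+1 (x - y)).
Proof.
move=> [_ HQ] Jx; split.
- by move/(HQ _ _ Jx) => [y [Hy H]]; exists y; split=> //; apply/(rees_comb_genA hF).
- by move=> [y [Hy H]]; apply/(HQ _ _ Jx); exists y; split=> //; apply/(rees_comb_genA hF).
Qed.

Lemma genA_small S n x : (forall p, p \in S -> A p.1 p.2) -> (maxdeg S < n)%N ->
  genA J S n x -> small J m A n x.
Proof.
move=> HS Hn; elim=> [|y z _ Hy _ Hz|p r Hp Hle Hr]; [exact: sm0 | exact: smD |].
have Hd : (p.1 <= maxdeg S)%N by rewrite /maxdeg; apply: leq_bigmax_seq.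
apply: (@smJ _ _ _ _ _ (n - p.1)%N) => //; try lia.
by rewrite subKn; [apply: HS | lia].
Qed.

Lemma rees_nak S p : rees_gen J A S -> p \in S -> small J m A p.1 p.2 ->
  rees_gen J A (rem p S).
Proof.
move=> HS Hp Hsm.
have Hdec : forall n x, A n x -> exists l g, genA J (rem p S) n g /\ x = l * p.2 + g /\
    ((p.1 <= n)%N -> J (n - p.1)%N l) /\ ((n < p.1)%N -> l = 0).
  by move=> n x /(rees_gen_iff _ _ HS) /(decomp hF p).
have Hc : forall s, small J m A p.1 s -> exists u g, m u /\ genA J (rem p S) p.1 g /\
    s = u * p.2 + g.
  move=> s; elim=> [|y z _ [u1 [g1 [U1 [G1 ->]]]] _ [u2 [g2 [U2 [G2 ->]]]]|u a Hu Ha|k r a Hk Hkn Hr Ha].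
  - exists 0, 0; split; first exact: id0.
    by split; [exact: gA0 | rewrite mul0r addr0].
  - exists (u1 + u2), (g1 + g2); split; first exact: idD.
    by split; [exact: gAD | rewrite mulrDl addrACA].
  - have [l [g [Hg [-> _]]]] := Hdec _ _ Ha.
    exists (u * l), (u * g); split; first exact: idMr.
    by split; [exact: genA_scale | rewrite mulrDr mulrA].
  - have [l [g [Hg [-> [_ Hz]]]]] := Hdec _ _ Ha.
    rewrite Hz; last by lia.
    exists 0, (r * g); split; first exact: id0.
    split; last by rewrite !mul0r !add0r.
    by have := genA_shift hF Hr Hg; rewrite subnKC.
have [u [g [Hu [Hg Hcg]]]] := Hc _ Hsm.
have [v Hv] := unit1m Hu.
have Hpc : genA J (rem p S) p.1 p.2.
  have -> : p.2 = v * g.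
    have Hg' : g = p.2 - u * p.2 by rewrite {1}Hcg addrAC subrr add0r.
    rewrite Hg'; transitivity (v * (1 - u) * p.2); first by rewrite Hv mul1r.
    ring.
  exact: genA_scale.
split; first by move=> q Hq; apply: HS.1; apply: mem_rem Hq.
move=> n x; split.
- move=> Hx; apply/(rees_comb_genA hF).
  have [l [g' [Hg' [-> [Hl Hz]]]]] := Hdec _ _ Hx.
  case: (leqP p.1 n) => Hle.
  + apply: gAD => //; have := genA_shift hF (Hl Hle) Hpc; rewrite subnK //.
  + by rewrite Hz // mul0r add0r.
- move/(rees_comb_genA hF) => H; apply/(rees_gen_iff _ _ HS).
  by apply: genA_sub H; apply: mem_rem.
Qed.

Lemma rees_min_not_small S p : rees_min_gen J A S -> p \in S -> ~ small J m A p.1 p.2.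
Proof. by move=> [HS Hmin] Hp Hs; apply: (Hmin p Hp); apply: rees_nak. Qed.

Lemma gr_small T n x : gr_gen J B T -> (maxdeg T < n)%N -> B n x ->
  exists s, small J m A n s /\ J n.+1 (x - s).
Proof.
move=> HT Hn Hx.
have [y [Hy Hxy]] := (gr_gen_iff HT Hx.1).1 Hx.
suff [s [Hs Hys]] : exists s, small J m A n s /\ J n.+1 (y - s).
  exists s; split=> //; have -> : x - s = (x - y) + (y - s) by rewrite addrA subrK.
  by apply: idD => //; apply: Jid.
elim: Hy {Hxy} => [|y1 y2 _ [s1 [S1 H1]] _ [s2 [S2 H2]]|q r Hq Hle Hr].
- by exists 0; split; [exact: sm0 | rewrite subrr; apply: id0; apply: Jid].
- exists (s1 + s2); split; first exact: smD.
  by rewrite opprD addrACA; apply: idD => //; apply: Jid.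
- have Bq := gr_gen_mem HT Hq.
  have [Jq [a [Ha Hqa]]] := (B_char _ _).1 Bq.
  have Hd : (q.1 <= maxdeg T)%N by rewrite /maxdeg; apply: leq_bigmax_seq.
  exists (r * a); split.
  + apply: (@smJ _ _ _ _ _ (n - q.1)%N) => //; try lia.
    by rewrite subKn //; lia.
  + rewrite -mulrBr; apply: (Jeq (n := ((n - q.1) + q.1.+1)%N)); first by lia.
    exact: JM.
Qed.

Lemma gr_nak T q : gr_gen J B T -> q \in T ->
  (exists y, small J m A q.1 y /\ J q.1.+1 (q.2 - y)) -> gr_gen J B (rem q T).
Proof.
move=> HT Hq [y0 [Hy0 Hqy0]].
have Hdec : forall n x, J n x -> B n x -> exists l g z, genA J (rem q T) n g /\
    x = l * q.2 + g + z /\ J n.+1 z /\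
    ((q.1 <= n)%N -> J (n - q.1)%N l) /\ ((n < q.1)%N -> l = 0).
  move=> n x Jx /(gr_gen_iff HT Jx) [y [Hy Hxy]].
  have [l [g [Hg [Ey [Hl Hz]]]]] := decomp hF q Hy.
  exists l, g, (x - y); split=> //; split; last by [].
  by rewrite -Ey addrC subrK.
have Hc : forall s, small J m A q.1 s -> exists u g, m u /\ genA J (rem q T) q.1 g /\
    J q.1.+1 (s - (u * q.2 + g)).
  move=> s; elim=> [|y z _ [u1 [g1 [U1 [G1 H1]]]] _ [u2 [g2 [U2 [G2 H2]]]]|u a Hu Ha|k r a Hk Hkn Hr Ha].
  - exists 0, 0; split; first exact: id0.
    by split; [exact: gA0 | rewrite mul0r addr0 subrr; apply: id0; apply: Jid].
  - exists (u1 + u2), (g1 + g2); split; first exact: idD.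
    split; first exact: gAD.
    have -> : y + z - ((u1 + u2) * q.2 + (g1 + g2)) =
       (y - (u1 * q.2 + g1)) + (z - (u2 * q.2 + g2)) by ring.
    by apply: idD => //; apply: Jid.
  - have Ba : B q.1 a.
      apply/B_char; split; first exact: Ha.1.
      by exists a; split=> //; rewrite subrr; apply: id0; apply: Jid.
    have [l [g [z [Hg [Ea [Hz _]]]]]] := Hdec _ _ Ha.1 Ba.
    exists (u * l), (u * g); split; first exact: idMr.
    split; first exact: genA_scale.
    have -> : u * a - (u * l * q.2 + u * g) = u * z by rewrite Ea; ring.
    by apply: idM => //; apply: Jid.
  - have Ba : B (q.1 - k)%N a.
      apply/B_char; split; first exact: Ha.1.
      by exists a; split=> //; rewrite subrr; apply: id0; apply: Jid.
    have [l [g [z [Hg [Ea [Hz [_ Hl]]]]]]] := Hdec _ _ Ha.1 Ba.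
    exists 0, (r * g); split; first exact: id0.
    split; first by have := genA_shift hF Hr Hg; rewrite subnKC.
    have -> : r * a - (0 * q.2 + r * g) = r * z by rewrite Ea Hl; [ring | lia].
    apply: (Jeq (n := (k + (q.1 - k).+1)%N)); first by lia.
    exact: JM.
have [u [g0 [Hu [Hg0 Hsg]]]] := Hc _ Hy0.
have [v Hv] := unit1m Hu.
have Hcg : J q.1.+1 (q.2 - v * g0).
  have -> : q.2 - v * g0 = v * ((q.2 - y0) + (y0 - (u * q.2 + g0))).
    transitivity (v * (1 - u) * q.2 - v * g0); first by rewrite Hv mul1r.
    ring.
  by apply: idM; [apply: Jid | apply: idD => //; apply: Jid].
split; first by move=> p Hp; apply: HT.1; apply: mem_rem Hp.
move=> n x Jx; split.
- move=> Bx.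
  have [l [g [z [Hg [Ex [Hz [Hl Hl0]]]]]]] := Hdec n x Jx Bx.
  case: (leqP q.1 n) => Hle.
  + exists (l * (v * g0) + g); split.
      apply/(rees_comb_genA hF); apply: gAD => //.
      by have := genA_shift hF (Hl Hle) (@genA_scale _ _ hF _ _ _ v Hg0); rewrite subnK.
    have -> : x - (l * (v * g0) + g) = l * (q.2 - v * g0) + z by rewrite Ex; ring.
    have H1 : J n.+1 (l * (q.2 - v * g0)).
      apply: (Jeq (n := ((n - q.1) + q.1.+1)%N)); first by lia.
      exact: (JM hF (Hl Hle) Hcg).
    by apply: idD => //; apply: Jid.
  + exists g; split; first exact/(rees_comb_genA hF).
    by rewrite Ex Hl0 // mul0r add0r addrAC subrr add0r.
- move=> [y [Hy Hxy]]; apply/(gr_gen_iff HT Jx); exists y; split=> //.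
  by apply: (genA_sub (S := rem q T)); [apply: mem_rem | apply/(rees_comb_genA hF)].
Qed.

Lemma gr_min_not_small T q : gr_min_gen J B T -> q \in T ->
  ~ (exists y, small J m A q.1 y /\ J q.1.+1 (q.2 - y)).
Proof. by move=> [HT Hmin] Hq Hs; apply: (Hmin q Hq); apply: gr_nak. Qed.

Lemma small_down D x : (forall y, J 1%N y -> m y) -> small J m A D.+1 x -> small J m A D x.
Proof.
move=> Jm; elim=> [|y z _ Hy _ Hz|u a Hu Ha|k r a Hk Hkn Hr Ha].
- exact: sm0.
- exact: smD.
- by apply: smM Hu (A_dec (leqnSn D) Ha).
- case: (eqVneq k 1%N) => [Ek|Nk].
  + subst k; apply: smM; first exact: Jm.
    by move: Ha; rewrite subSS subn0.
  + apply: (@smJ _ _ _ _ _ k.-1) => //; try lia.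
    * by apply: (Jdec (n := k)) => //; lia.
    * by have -> : (D - k.-1 = D.+1 - k)%N by lia.
Qed.


Lemma main_sec : noetherian_filtration J ->
  (exists S, rees_min_gen J (ar_ideal J I) S) /\
  (exists T, gr_min_gen J (in_ideal J I) T) /\
  (forall S T, rees_min_gen J (ar_ideal J I) S -> gr_min_gen J (in_ideal J I) T ->
     maxdeg S = maxdeg T).
Proof.
move=> hN.
pose Q (p : {poly R}) := forall i, A i p`_i.
have HQ : rees_ideal J Q.
  split; first by move=> p Hp i; exact: (Hp i).1.
  split; first by move=> i; rewrite coef0; apply: A0.
  split; first by move=> p q Hp Hq i; rewrite coefD; apply: A_add.
  move=> a p Ha Hp i; rewrite coefM; apply: big_ind => [|x y|j _]; [exact: A0 | exact: A_add |].
  have Hj := ltn_ord j.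
  apply: (A_dec (n := (j + (i - j))%N)); first by lia.
  by apply: A_mulJ.
have [s [Hs Hgen]] := hN Q HQ.
have HsQ : forall p, p \in s -> Q p.
  move=> p Hp; apply/Hgen.
  exists (fun i => if i == index p s then 1 else 0); split.
    move=> i; case: eqP => _ k; last by rewrite coef0; apply: id0; apply: Jid.
    rewrite coef1; case: k => [|k]; first exact: Jall0.
    by rewrite /=; apply: id0; apply: Jid.
  have Hk : (index p s < size s)%N by rewrite index_mem.
  rewrite (bigD1 (Ordinal Hk)) //= eqxx mul1r nth_index // big1 ?addr0 // => i Hne.
  have -> : (nat_of_ord i == index p s) = false.
    by apply/negbTE; apply: contra Hne => /eqP Hi; apply/eqP; apply: val_inj.
  by rewrite mul0r.
pose S0 := allpairs_dep (fun (q : {poly R}) (i : nat) => (i, q`_i)) s (fun q => iota 0 (size q)).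
have HS0A : forall p, p \in S0 -> A p.1 p.2.
  by move=> p /allpairsPdep [q [i [Hq _ ->]]] /=; apply: HsQ.
have HS0 : rees_gen J A S0.
  split; first by move=> p /HS0A [].
  move=> n x; split; last first.
    by move/(rees_comb_genA hF); apply: genA_inA.
  move=> Hx; apply/(rees_comb_genA hF).
  have HP : Q (x *: 'X^n).
    move=> i; rewrite coefZ coefXn; case: eqP => [->|_]; first by rewrite mulr1.
    by rewrite mulr0; apply: A0.
  have [c [Hc E]] := (Hgen _).1 HP.
  have -> : x = (x *: 'X^n)`_n by rewrite coefZ coefXn eqxx mulr1.
  rewrite E coef_sum; apply: genA_sum => k _.
  rewrite coefM; apply: genA_sum => j _.
  have Hj := ltn_ord j.
  case: (ltnP (n - j) (size s`_k)) => Hsz.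
  - have Hmem : ((n - j)%N, s`_k`_(n - j)) \in S0.
      apply/allpairsPdep; exists s`_k, (n - j)%N; split=> //.
        exact: mem_nth.
      by rewrite mem_iota.
    apply: (gAg Hmem) => /=; first exact: leq_subr.
    by rewrite subKn //; apply: Hc.
  - have -> : (s`_k)`_(n - j) = 0 by apply: nth_default.
    by rewrite mulr0; apply: gA0.
have HS0gr : gr_gen J B S0.
  split; first exact: HS0.1.
  move=> n x Jx; split.
  - move/B_char => [_ [a [Ha Hxa]]]; exists a; split=> //.
    exact: (HS0.2 n a).1 Ha.
  - move=> [y [Hy Hxy]]; apply/B_char; split=> //; exists y; split=> //.
    exact: (HS0.2 n y).2 Hy.
split; first exact: prune HS0.
split; first exact: prune HS0gr.
move=> S T HS HT.
have HSA : forall p, p \in S -> A p.1 p.2 := fun p Hp => rees_gen_mem HS.1 Hp.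
have HTB : forall q, q \in T -> B q.1 q.2 := fun q Hq => gr_gen_mem HT.1 Hq.
have H1 : (maxdeg T <= maxdeg S)%N.
  rewrite /maxdeg; apply/bigmax_leqP_seq => q Hq _; rewrite leqNgt; apply/negP => Hlt.
  apply: (gr_min_not_small HT Hq).
  have [Jq [a [Ha Hqa]]] := (B_char _ _).1 (HTB q Hq).
  exists a; split=> //; apply: (genA_small HSA Hlt).
  exact/(rees_gen_iff _ _ HS.1).
have H2 : (maxdeg S <= maxdeg T)%N.
  case: (S =P [::]) => [->|HSn]; first by rewrite /maxdeg big_nil.
  have [p Hp Ep] := max_exists HSn; rewrite -Ep.
  case: (classic (J 1%N 1)) => J11.
  - case E: p.1 => [//|d]; exfalso.
    apply: (rees_min_not_small HS Hp); rewrite E -[p.2]mul1r.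
    apply: (@smJ _ _ _ _ _ 1%N) => //.
    rewrite subSS subn0; apply: (A_dec (n := d.+1)) => //.
    by rewrite -E; apply: HSA.
  - have Jm : forall y, J 1%N y -> m y := hmax (Jid 1 hF) J11.
    rewrite leqNgt; apply/negP => Hlt.
    have Bp : B p.1 p.2.
      apply/B_char => //; split; first exact: (HSA p Hp).1.
      by exists p.2; split; [apply: HSA | rewrite subrr; apply: id0; apply: Jid].
    have [y [Hy Hpy]] := gr_small HT.1 Hlt Bp.
    have Ay := small_A Hy.
    have A1 : A p.1.+1 (p.2 - y).
      by split=> //; apply: idB => //; [exact: (HSA p Hp).2 | exact: Ay.2].
    have Hs1 : small J m A p.1.+1 (p.2 - y).
      apply: (genA_small HSA); first by rewrite Ep.
      exact/(rees_gen_iff _ _ HS.1).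
    apply: (rees_min_not_small HS Hp).
    have -> : p.2 = (p.2 - y) + y by rewrite subrK.
    apply: smD => //; exact: (small_down Jm).
by apply/eqP; rewrite eqn_leq H2 H1.
Qed.
End Main.

Theorem proposition5p5 (R : comNzRingType) (J : nat -> R -> Prop) (I : R -> Prop) :
  noetherian_ring R -> local_ring R -> filtration J -> noetherian_filtration J ->
  is_ideal I ->
  (exists S, rees_min_gen J (ar_ideal J I) S) /\
  (exists T, gr_min_gen J (in_ideal J I) T) /\
  (forall S T, rees_min_gen J (ar_ideal J I) S -> gr_min_gen J (in_ideal J I) T ->
     maxdeg S = maxdeg T).
Proof.
move=> _ [m [hm [hm1 hmax]]] hF hN hI.
exact: (main_sec hF hI hm hm1 hmax hN).
Qed.
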